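(* Let $S \subseteq \mathbb{R}^n$ be nonempty, closed and convex, and let $F_i = f_i + g_i$, $i = 1,\dots,m$, where each $f_i \colon S \to \mathbb{R}$ is continuously differentiable (not necessarily convex) and each $g_i \colon S \to \mathbb{R}$ is convex (not necessarily differentiable). For $\ell > 0$ define \[ w_\ell(x) := \max_{y \in S} \min_{i = 1,\dots,m} \left\{ \nabla f_i(x)^\top (x - y) + g_i(x) - g_i(y) - \frac{\ell}{2}\|x - y\|^2 \right\}, \quad x\in S. \] Then $w_\ell(x) \ge 0$ for all $x \in S$. Moreover, $x \in S$ is Pareto stationary for $\min_{x \in S} F(x)$, $F = (F_1,\dots,F_m)^\top$, if and only if $w_\ell(x) = 0$.
   Context: A point $\bar x \in S$ is Pareto stationary for $\min_{x\in S}F(x)$ if $\max_{i=1,\dots,m} F_i'(\bar x; z - \bar x) \ge 0$ for all $z \in S$, where $F_i'(x;d) := \lim_{t\searrow0}(F_i(x+td)-F_i(x))/t$ is the directional derivative. *)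

(* Defs.v *)
From HB Require Import structures.
From mathcomp Require Import all_boot all_order all_algebra.
From mathcomp Require Import all_classical all_reals all_analysis.
Set Implicit Arguments. Unset Strict Implicit. Unset Printing Implicit Defensive.
Import Order.TTheory GRing.Theory Num.Theory.
Import numFieldNormedType.Exports.
Local Open Scope classical_set_scope.
Local Open Scope ring_scope.

Definition sqnorm {R : realType} {n : nat} (v : 'rV[R]_n) : R :=
  \sum_(j < n) (v ord0 j) ^+ 2.

(* Convexity of g on the convex set S (values of g outside S are irrelevant). *)
Definition convex_on {R : realType} {n : nat} (S : set 'rV[R]_n)
  (g : 'rV[R]_n -> R) : Prop :=
  forall x y (t : R), S x -> S y -> 0 <= t <= 1 ->
    g (t *: x + (1 - t) *: y) <= t * g x + (1 - t) * g y.

Definition C1_on {R : realType} {n : nat} (U : set 'rV[R]_n)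
  (f : 'rV[R]_n -> R) : Prop :=
  (forall x, U x -> differentiable f x) /\
  (forall v : 'rV[R]_n, {in U, continuous (fun x => 'd f x v)}).

Definition dirder {R : realType} {n : nat} (F : 'rV[R]_n -> R)
  (x d : 'rV[R]_n) : \bar R :=
  lim ((fun t : R => ((F (x + t *: d) - F x) / t)%:E) @ 0^'+).

Definition pareto_stationary {R : realType} {n m : nat} (S : set 'rV[R]_n)
  (F : 'I_m -> 'rV[R]_n -> R) (xb : 'rV[R]_n) : Prop :=
  S xb /\
  forall z, S z -> (0 <= \big[Order.max/-oo%E]_(i < m) dirder (F i) xb (z - xb))%E.

Definition w_merit {R : realType} {n m : nat} (S : set 'rV[R]_n)
  (f g : 'I_m -> 'rV[R]_n -> R) (l : R) (x : 'rV[R]_n) : \bar R :=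
  ereal_sup [set (\big[Order.min/+oo%E]_(i < m)
                   ('d (f i) x (x - y) + g i x - g i y - l / 2 * sqnorm (x - y))%:E)%E
            | y in S].

(* Main.v *)
Require Import Defs.
From HB Require Import structures.
From mathcomp Require Import all_boot all_order all_algebra.
From mathcomp Require Import all_classical all_reals all_analysis.
From mathcomp Require Import ring lra.
Import Order.TTheory GRing.Theory Num.Theory.
Import numFieldNormedType.Exports.
Local Open Scope classical_set_scope.
Local Open Scope ring_scope.
Lemma fquot (R : realType) n (f : 'rV[R]_n -> R) x d : differentiable f x ->
  (fun t : R => (f (x + t *: d) - f x) / t) @ 0^'+ --> 'd f x d.
Proof.
move=> df.
have H : derivable f x d by exact: diff_derivable.
have H2 : (fun h : R => h^-1 *: ((f \o shift x) (h *: d) - f x)) @ 0^' --> 'D_d f x := H.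
move: H2; rewrite deriveE // => /cvg_dnbhs_at_right.
apply: cvg_trans; apply: near_eq_cvg; near=> t => /=.
by rewrite (addrC (t *: d)) mulrC.
Unshelve. all: by end_near. Qed.

Lemma segS (R : realType) n (S : set 'rV[R]_n) x z t :
  convex_set S -> S x -> S z -> 0 <= t -> t <= 1 -> S (x + t *: (z - x)).
Proof.
move=> cS Sx Sz t0 t1.
have := cS z x (Itv01 t0 t1); rewrite !inE => /(_ Sz Sx).
congr S.
change (t *: z + (1 - t) *: x = x + t *: (z - x)).
by rewrite scalerBl scale1r scalerBr addrCA.
Qed.

Lemma Gmono (R : realType) n (S : set 'rV[R]_n) (g : 'rV[R]_n -> R) x z s t :
  convex_set S -> convex_on S g -> S x -> S z -> 0 < s -> s <= t -> t <= 1 ->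
  (g (x + s *: (z - x)) - g x) / s <= (g (x + t *: (z - x)) - g x) / t.
Proof.
move=> cS cg Sx Sz s0 st t1.
have t0 : 0 < t by apply: lt_le_trans st.
have Sy := @segS _ _ S x z t cS Sx Sz (ltW t0) t1.
set y := x + t *: (z - x).
have key : x + s *: (z - x) = (s / t) *: y + (1 - s / t) *: x.
  apply/rowP => j; rewrite !mxE; field; exact: lt0r_neq0.
have l0 : 0 <= s / t by rewrite divr_ge0 // ltW.
have l1 : s / t <= 1 by rewrite ler_pdivrMr // mul1r.
have := cg y x (s / t) Sy Sx; rewrite l0 l1 => /(_ isT); rewrite -key => H.
rewrite ler_pdivrMr //.
have -> : (g y - g x) / t * s = s / t * (g y - g x) by ring.
have -> : s / t * (g y - g x) = s / t * g y + (1 - s / t) * g x - g x by ring.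
by rewrite lerD2r.
Qed.

Definition Gq (R : realType) n (g : 'rV[R]_n -> R) x d (t : R) : R :=
  (g (x + t *: d) - g x) / t.
Arguments Gq {R n}.

Lemma Gcvg (R : realType) n (S : set 'rV[R]_n) (g : 'rV[R]_n -> R) x z :
  convex_set S -> convex_on S g -> S x -> S z ->
  (fun t => (Gq g x (z - x) t)%:E) @ 0^'+ -->
    ereal_inf ((fun t => (Gq g x (z - x) t)%:E) @` `]0, 1]).
Proof.
move=> cS cg Sx Sz.
apply: (@nondecreasing_at_right_cvge _ _ 0 (BRight 1)); first by rewrite bnd_simp.
move=> s t; rewrite !in_itv /= => /andP[s0 s1] /andP[t0 t1] st.
rewrite lee_fin; exact: (@Gmono _ _ S).
Qed.

Lemma dirderE (R : realType) n (S : set 'rV[R]_n) (f g : 'rV[R]_n -> R) x z :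
  convex_set S -> convex_on S g -> S x -> S z -> differentiable f x ->
  dirder (f \+ g) x (z - x) =
    (('d f x (z - x))%:E + ereal_inf ((fun t : R => (Gq g x (z - x) t)%:E) @` `]0%R, 1%R]))%E.
Proof.
move=> cS cg Sx Sz df.
apply: cvg_lim => //.
have HA : (fun t => ((f (x + t *: (z - x)) - f x) / t)%:E) @ 0^'+ --> ('d f x (z - x))%:E.
  apply: cvg_EFin; first by near=> t.
  exact: fquot.
have HD := cvgeD (@fin_num_adde_defr R (('d f x (z - x))%:E) _ isT) HA (@Gcvg _ _ S g x z cS cg Sx Sz).
apply: (cvg_trans _ (HD _)); apply: near_eq_cvg; near=> t => /=.
rewrite /Gq -EFinD -mulrDl; congr (EFin (_ * _)).
by rewrite opprD addrACA.
Unshelve. all: by end_near. Qed.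

Arguments dirderE {R n S f g x z}.
Arguments Gcvg {R n S g x z}.

Lemma sqnorm_ge0 (R : realType) n (v : 'rV[R]_n) : 0 <= sqnorm v.
Proof. by apply: sumr_ge0 => j _; exact: sqr_ge0. Qed.

Lemma sqnormNZ (R : realType) n (t : R) (v : 'rV[R]_n) :
  sqnorm (- (t *: v)) = t ^+ 2 * sqnorm v.
Proof. rewrite /sqnorm mulr_sumr; apply: eq_bigr => j _; rewrite !mxE; ring. Qed.

Lemma subDK (R : realType) n (x v : 'rV[R]_n) : x - (x + v) = - v.
Proof. by rewrite opprD addrA subrr add0r. Qed.

Lemma lin0 (R : realType) (a b : R) : (fun t : R => a * t * b) @ 0^'+ --> 0.
Proof.
suff H : (fun t : R => a * t * b) @ 0 --> a * 0 * b.
  by rewrite mulr0 mul0r in H; exact: cvg_at_right_filter H.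
apply: cvgMr_tmp; apply: cvgMl_tmp; exact: cvg_id.
Qed.

Arguments sqnorm_ge0 {R n}.
Arguments sqnormNZ {R n}.
Arguments subDK {R n}.

Theorem theorem3p10 (R : realType) (n m : nat) (S : set 'rV[R]_n)
  (f g : 'I_m -> 'rV[R]_n -> R) (U : set 'rV[R]_n) (l : R) :
  (0 < m)%N ->
  S !=set0 -> closed S -> convex_set S ->
  open U -> S `<=` U -> (forall i, C1_on U (f i)) ->
  (forall i, convex_on S (g i)) ->
  0 < l ->
  (forall x, S x -> (0 <= w_merit S f g l x)%E) /\
  (forall x, S x ->
     (pareto_stationary S (fun i => f i \+ g i) x <-> w_merit S f g l x = 0%E)).
Proof.
move=> m0 _ _ cS _ SU C1 cg l0.
set term := fun x y => (\big[Order.min/+oo%E]_(i < m)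
                   ('d (f i) x (x - y) + g i x - g i y - l / 2 * sqnorm (x - y))%:E)%E.
have term0 x : (0 <= term x x)%E.
  apply: le_bigmin => // i _.
  rewrite subrr linear0 /sqnorm big1 => [|j _]; last by rewrite mxE expr0n.
  by rewrite mulr0 subr0 add0r subrr.
have wge0 x : S x -> (0 <= w_merit S f g l x)%E.
  move=> Sx; apply: le_trans (term0 x) _; apply: ereal_sup_ubound; by exists x.
split => // x Sx.
have df i : differentiable (f i) x := (C1 i).1 x (SU x Sx).
have K1 y : S y -> (0 < term x y)%E ->
    (\big[Order.max/-oo%E]_(i < m) dirder (f i \+ g i)%R x (y - x) < 0)%E.
  move=> Sy /bigmin_gtP[_ pos]; apply/bigmax_ltP; split => // i _.
  have := pos i isT; rewrite lte_fin => posi.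
  rewrite (dirderE cS (cg i) Sx Sy (df i)).
  apply: (@le_lt_trans _ _ (('d (f i) x (y - x))%:E + (Gq (g i) x (y - x) 1)%:E)%E).
    apply: leeD => //; apply: ereal_inf_lbound; exists 1 => //=.
    by rewrite in_itv /= ltr01 lexx.
  rewrite -EFinD lte_fin /Gq scale1r divr1.
  have -> : x + (y - x) = y by rewrite addrC subrK.
  move: posi; have -> : x - y = - (y - x) by rewrite opprB.
  rewrite linearN /=.
  have := sqnorm_ge0 (- (y - x)).
  set a := 'd (f i) x (y - x); set q := sqnorm (- (y - x)) => hq.
  have : 0 <= l / 2 * q by rewrite mulr_ge0 // divr_ge0 // ltW.
  lra.
have K2 z : S z ->
    (\big[Order.max/-oo%E]_(i < m) dirder (f i \+ g i)%R x (z - x) < 0)%E ->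
    exists2 y, S y & (0 < term x y)%E.
  move=> Sz /bigmax_ltP[_ neg].
  set d := z - x.
  pose Q i t := 'd (f i) x d + Gq (g i) x d t + l / 2 * t * sqnorm d.
  have HQ i : (fun t => (Q i t)%:E) @ 0^'+ --> dirder (f i \+ g i)%R x d.
    rewrite (dirderE cS (cg i) Sx Sz (df i)) -[X in _ --> X]adde0.
    have H1 := cvgeD (@fin_num_adde_defr R (('d (f i) x d)%:E) _ isT) (cvg_cst _)
      (Gcvg cS (cg i) Sx Sz).
    have H2 : (fun t => (l / 2 * t * sqnorm d)%:E) @ 0^'+ --> 0%:E.
      apply: cvg_EFin; first by near=> t.
      exact: lin0.
    have H3 := cvgeD (@fin_num_adde_defl R _ (0%:E) isT) (H1 _ _) H2.
    apply: (cvg_trans _ (H3 _ _ _)); apply: near_eq_cvg; near=> t => /=.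
    by rewrite /Q -!EFinD.
  have ev : \forall t \near 0^'+, (forall i, (Q i t)%:E < 0)%E /\ 0 < t /\ t < 1.
    near=> t; split; last split.
    - near: t; apply: filter_forall => i.
      apply: (HQ i [set e | e < 0]%E); apply: open_nbhs_nbhs; split.
        exact: open_ereal_lt_ereal.
      exact: neg.
    - by near: t; exact: nbhs_right_gt.
    - by near: t; exact: nbhs_right_lt.
  case: (@filter_ex R (0:R)^'+ _ _ ev) => t [Qn [t0 t1]].
  exists (x + t *: d); first exact: (@segS _ _ S x z t cS Sx Sz (ltW t0) (ltW t1)).
  apply: lt_bigmin => // i _.
  rewrite subDK linearN linearZ /= sqnormNZ lte_fin.
  have := Qn i; rewrite lte_fin /Q /Gq.
  set a := 'd (f i) x d; set q := sqnorm d.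
  set gy := g i (x + t *: d); set gx := g i x.
  set h := (gy - gx) / t.
  have egy : gy = gx + t * h by rewrite /h mulrC divfK ?lt0r_neq0 // addrC subrK.
  move=> H.
  have -> : - (t *: a) + gx - gy - l / 2 * (t ^+ 2 * q) = t * - (a + h + l / 2 * t * q).
    rewrite egy; change (t *: a) with (t * a); ring.
  by apply: mulr_gt0 => //; rewrite oppr_gt0.
split.
- move=> [_ H]; apply/eqP; rewrite eq_le wge0 // andbT.
  apply: ge_ereal_sup => _ [y Sy <-].
  rewrite leNgt; apply/negP => pos.
  have := H y Sy; rewrite leNgt (K1 y Sy pos).
  done.
- move=> w0; split => // z Sz.
  rewrite leNgt; apply/negP => neg.
  have [y Sy pos] := K2 z Sz neg.
  have : (term x y <= w_merit S f g l x)%E by apply: ereal_sup_ubound; exists y.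
  by rewrite w0 leNgt pos.
Unshelve. all: by end_near. Qed.
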